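(* If $G$ is a nice connected graph of order $n$, maximum degree $\Delta$ and chromatic number $k$, then ${\rm ML}^{\rm W}(G) \leq 2k(n-1)+2\Delta$.
   Context: All graphs are finite and simple. A walk of a graph $G$ is a sequence of vertices $u_0u_1\dots u_p$ with $u_tu_{t+1}\in E(G)$ for all $t$ (vertices and edges may repeat); its length is $p$. For a walk $W$ of $G$, $G+W$ is the multigraph on $V(G)$ whose edge multiset consists of $E(G)$ together with each edge added as many times as $W$ traverses it. A multigraph is locally irregular if no two adjacent vertices have the same degree; a walk is irregularising if $G+W$ is locally irregular. A graph is nice if it is connected and not isomorphic to $K_2$. ${\rm ML}^{\rm W}(G)$ denotes the minimum length of an irregularising walk of $G$ (a walk of length $0$ is allowed). *)

(* Defs.v *)
From mathcomp Require Import all_boot.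
Set Implicit Arguments. Unset Strict Implicit. Unset Printing Implicit Defensive.

Section Graphs.
Variable T : finType.
Variable e : rel T.

Definition simple_graph : Prop := symmetric e /\ irreflexive e.

Definition deg (v : T) : nat := #|[set w | e v w]|.

Definition max_deg : nat := \max_(v : T) deg v.

Definition connected_graph : Prop := 0 < #|T| /\ forall x y : T, connect e x y.

Definition is_K2 : Prop := #|T| = 2 /\ (forall x y : T, x != y -> e x y).

Definition nice : Prop := connected_graph /\ ~ is_K2.

Definition proper_coloring (k : nat) (c : T -> 'I_k) : Prop :=
  forall x y, e x y -> c x != c y.

Definition colorable (k : nat) : Prop := exists c : T -> 'I_k, proper_coloring c.

Definition chromatic_number_is (k : nat) : Prop :=
  colorable k /\ forall j, colorable j -> k <= j.

(* A walk u_0 u_1 ... u_p is given by its start u0 and the list s = [u_1;...;u_p],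
   subject to path e u0 s; its length is p = size s. *)
Definition is_walk (u0 : T) (s : seq T) : bool := path e u0 s.

Definition walk_length (u0 : T) (s : seq T) : nat := size s.

Definition walk_steps (u0 : T) (s : seq T) : seq (T * T) := zip (u0 :: s) s.

(* multiplicity of the edge xy in the multigraph G + W *)
Definition mult (u0 : T) (s : seq T) (x y : T) : nat :=
  (e x y : nat) + count (fun st => (st == (x, y)) || (st == (y, x))) (walk_steps u0 s).

(* degree of v in G + W (no loops, as G+W has edges only between distinct vertices) *)
Definition deg_plus (u0 : T) (s : seq T) (v : T) : nat :=
  \sum_(w : T) mult u0 s v w.

Definition locally_irregular_plus (u0 : T) (s : seq T) : Prop :=
  forall x y : T, 0 < mult u0 s x y -> deg_plus u0 s x != deg_plus u0 s y.

Definition irregularising (u0 : T) (s : seq T) : Prop :=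
  is_walk u0 s /\ locally_irregular_plus u0 s.

Definition MLW_le (b : nat) : Prop :=
  exists (u0 : T) (s : seq T), irregularising u0 s /\ walk_length u0 s <= b.

End Graphs.

(* Main.v *)
Require Import Defs.
From mathcomp Require Import all_boot zify.
Set Implicit Arguments. Unset Strict Implicit. Unset Printing Implicit Defensive.

Section Walks.
Variable T : finType.
Variable e : rel T.
Hypothesis esym : symmetric e.
Hypothesis eirr : irreflexive e.

Fixpoint incr (x : T) (s : seq T) (v : T) : nat :=
  if s is a :: s' then (x == v) + (a == v) + incr a s' v else 0.

Lemma incr_cat x s1 s2 v : incr x (s1 ++ s2) v = incr x s1 v + incr (last x s1) s2 v.
Proof. by elim: s1 x => [|a s1 IH] x //=; rewrite IH !addnA. Qed.

Lemma sum_eq1 (P : pred T) (a : T) : \sum_(w | P w) ((a == w) : nat) = P a.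
Proof.
rewrite big_mkcond (bigD1 a) //= eqxx big1 ?addn0; first by case: (P a).
by move=> w /negbTE; rewrite eq_sym => ->; case: (P w).
Qed.

Lemma sum_eq1' (P : pred T) (a : T) : \sum_(w | P w) ((w == a) : nat) = P a.
Proof. by rewrite -(sum_eq1 P a); apply: eq_bigr => w _; rewrite eq_sym. Qed.

Lemma deg_sum v : \sum_(w : T) (e v w : nat) = deg e v.
Proof.
rewrite /deg cardsE -sum1_card [RHS]big_mkcond /=; apply: eq_bigr => w _.
by rewrite unfold_in; case: (e v w).
Qed.

Lemma step_sum (a b v : T) : a != b ->
  \sum_(w : T) (((a, b) == (v, w)) || ((a, b) == (w, v)) : nat) = (a == v) + (b == v).
Proof.
move=> ab.
have H : forall w, (((a, b) == (v, w)) || ((a, b) == (w, v)) : nat)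
          = ((a == v) && (b == w)) + ((a == w) && (b == v)).
  move=> w; rewrite !xpair_eqE.
  case: (a =P v) => [av|]; case: (b =P w) => [bw|]; case: (a =P w) => [aw|];
    case: (b =P v) => [bv|] //=; subst; by rewrite ?eqxx in ab.
rewrite (eq_bigr _ (fun w _ => H w)) big_split /=.
have -> : \sum_(w : T) ((a == v) && (b == w) : nat) = (a == v) * (b == b).
  case: (a == v) => /=; last by rewrite big1 // => w _.
  by rewrite mul1n eqxx -[RHS](sum_eq1 predT b).
have -> : \sum_(w : T) ((a == w) && (b == v) : nat) = (b == v).
  case: (b == v) => /=; last by rewrite big1 // => w _; rewrite andbF.
  by rewrite -[RHS](sum_eq1 predT a); apply: eq_bigr => w _; rewrite andbT.
by rewrite eqxx muln1.
Qed.

Lemma deg_plus_incr (x : T) (s : seq T) (v : T) : path e x s -> deg_plus e x s v = deg e v + incr x s v.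
Proof.
rewrite /deg_plus /mult big_split /= deg_sum => Hp; congr (_ + _).
elim: s x Hp => [|a s IH] x /=.
  by move=> _; rewrite /walk_steps /= big1.
case/andP=> xa Hp.
rewrite /walk_steps /=.
under eq_bigr do rewrite addnC.
rewrite big_split /= IH // step_sum; first lia.
by apply/eqP => xa'; rewrite xa' eirr in xa.
Qed.

Lemma steps_edge (x : T) (s : seq T) (st : T * T) : path e x s -> st \in walk_steps x s -> e st.1 st.2.
Proof.
elim: s x => [|a s IH] x //=.
case/andP => xa Hp; rewrite /walk_steps /= inE; case/orP => [/eqP -> //|].
exact: IH.
Qed.

Lemma mult_edge (x : T) (s : seq T) (a b : T) : path e x s -> 0 < mult e x s a b -> e a b.
Proof.
move=> Hp; rewrite /mult; case eab: (e a b) => //=.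
rewrite add0n -has_count => /hasP [st Hst /orP [] /eqP Est];
  have := steps_edge Hp Hst; rewrite Est /= => E1.
  by rewrite E1 in eab.
by rewrite esym E1 in eab.
Qed.

Lemma split_at (x : T) (s : seq T) (a : T) : a \in x :: s -> exists s1 s2, s = s1 ++ s2 /\ last x s1 = a.
Proof.
rewrite inE; case/orP => [/eqP ->|Ha]; first by exists [::], s.
case/splitPr: Ha => s1 s2; exists (rcons s1 a), s2.
by rewrite cat_rcons last_rcons.
Qed.

Definition ins (a b : T) (m : nat) : seq T := flatten (nseq m [:: b; a]).

Lemma ins_prop (a b : T) (m : nat) : e a b ->
  [/\ path e a (ins a b m), last a (ins a b m) = a, size (ins a b m) = m.*2
    & forall v, incr a (ins a b m) v = (m * ((a == v) + (b == v))).*2].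
Proof.
move=> ab; have ba : e b a by rewrite esym.
elim: m => [|m [IH1 IH2 IH3 IH4]] //=; split.
- by rewrite /ins /= ab ba.
- by rewrite /ins /=.
- by rewrite /ins /= in IH3 *; rewrite IH3 doubleS.
- move=> v; rewrite /ins /= in IH4 *; rewrite IH4; lia.
Qed.

Lemma insert_walk (x : T) (s : seq T) (a b : T) (m : nat) : path e x s -> a \in x :: s -> e a b ->
  exists s', [/\ path e x s', last x s' = last x s, size s' = size s + m.*2,
    {subset x :: s <= x :: s'} & (0 < m -> b \in x :: s') /\ forall v, incr x s' v = incr x s v + (m * ((a == v) + (b == v))).*2].
Proof.
move=> Hp Ha ab; case: (split_at Ha) => s1 [s2 [Es La]]; subst s.
have [P1 P2 P3 P4] := ins_prop m ab.
exists (s1 ++ ins a b m ++ s2); split; last split.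
- move: Hp; rewrite !cat_path La P1 /= P2; by case/andP => ->.
- by rewrite !last_cat La P2.
- rewrite !size_cat P3; lia.
- by move=> w; rewrite !inE !mem_cat; case/orP => [->|/orP [] ->]; rewrite ?orbT.
- by move=> m0; rewrite inE !mem_cat; case: m m0 {P1 P2 P3 P4} => //= m _;
    rewrite /ins /= inE eqxx !orbT.
- move=> v; rewrite !incr_cat La P2 P4; lia.
Qed.

End Walks.
Section Dist.
Variable T : finType.
Variable e : rel T.
Hypothesis esym : symmetric e.
Variable y : T.
Hypothesis conn : forall v, connect e y v.

Fixpoint ball (n : nat) : {set T} :=
  if n is n'.+1 then ball n' :|: [set v | [exists u in ball n', e u v]] else [set y].

Lemma ball_S n : ball n \subset ball n.+1.
Proof. by apply/subsetP => v Hv /=; rewrite inE Hv. Qed.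

Lemma ball_mono m n : m <= n -> ball m \subset ball n.
Proof.
move=> /subnKC <-; elim: (n - m) => [|d IH]; first by rewrite addn0.
by rewrite addnS; apply: subset_trans IH (ball_S _).
Qed.

Lemma ball_step n u v : u \in ball n -> e u v -> v \in ball n.+1.
Proof. by move=> Hu uv /=; rewrite !inE; apply/orP; right; apply/existsP; exists u; rewrite Hu. Qed.

Lemma ball_path p x i : path e x p -> x \in ball i -> last x p \in ball (i + size p).
Proof.
elim: p x i => [|a p IH] x i /=; first by rewrite addn0.
case/andP => xa Hp Hx; rewrite addnS -addSn; apply: IH => //.
exact: ball_step Hx xa.
Qed.

Lemma ex_ball v : exists i, v \in ball i.
Proof.
case/connectP: (conn v) => p Hp ->; exists (0 + size p).
apply: ball_path => //; by rewrite /= inE.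
Qed.

Definition dist (v : T) : nat := ex_minn (ex_ball v).

Lemma dist_ball v : v \in ball (dist v).
Proof. by rewrite /dist; case: ex_minnP. Qed.

Lemma dist_min v i : v \in ball i -> dist v <= i.
Proof. by rewrite /dist; case: ex_minnP => j _ H /H. Qed.

Lemma dist_y : dist y = 0.
Proof. by apply/eqP; rewrite -leqn0; apply: dist_min; rewrite /= inE. Qed.

Lemma dist_edge u v : e u v -> dist v <= (dist u).+1.
Proof. move=> uv; apply: dist_min; exact: ball_step (dist_ball u) uv. Qed.

Lemma dist_par_ex v : v != y -> exists u, e u v && ((dist u).+1 == dist v).
Proof.
move=> vy; have Hv := dist_ball v.
case Ed: (dist v) Hv => [|d] /=.
  by rewrite inE (negbTE vy).
rewrite inE => /orP [Hd|].
  by have := dist_min Hd; rewrite Ed ltnn.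
rewrite inE => /existsP [u /andP [Hu uv]]; exists u; rewrite uv /=.
have du := dist_min Hu.
have : d <= dist u.
  rewrite leqNgt; apply/negP => Hlt.
  have : v \in ball d.
    apply: (subsetP (ball_mono Hlt)); exact: ball_step (dist_ball u) uv.
  by move/dist_min; rewrite Ed ltnn.
by move=> H; apply/eqP; congr S; apply/eqP; rewrite eqn_leq du H.
Qed.

Definition par (v : T) : T := odflt y [pick u | e u v && ((dist u).+1 == dist v)].

Lemma par_spec v : v != y -> e (par v) v /\ (dist (par v)).+1 = dist v.
Proof.
move=> vy; rewrite /par; case: pickP => [u /andP [uv /eqP ->] //|H].
by case: (dist_par_ex vy) => u; rewrite H.
Qed.

Lemma dist_pos v : v != y -> 0 < dist v.
Proof. by case/par_spec => _ <-. Qed.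

End Dist.

Section Tree.
Variable T : finType.
Variable e : rel T.
Hypothesis esym : symmetric e.
Variable y : T.
Variable par : T -> T.
Variable dist : T -> nat.
Variable m : T -> nat.
Hypothesis Hpar : forall v, v != y -> e (par v) v.
Hypothesis Hdist : forall v, v != y -> dist (par v) < dist v.
Hypothesis Hm : forall v, v != y -> 0 < m v.

Lemma tree_walk (S : {set T}) : y \in S -> (forall v, v \in S -> v != y -> par v \in S) ->
  exists s, [/\ path e y s, last y s = y, (forall v, v \in S -> v \in y :: s),
    size s = (\sum_(v in S | v != y) m v).*2
    & forall w, incr y s w = (\sum_(v in S | v != y) m v * ((par v == w) + (v == w))).*2].
Proof.
move: {2}#|S| (leqnn #|S|) => N; elim: N S => [|N IH] S HN yS Hcl.
  by move: HN; rewrite leqn0 => /eqP/cards0_eq E; rewrite E inE in yS.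
case: (pickP [pred v | (v \in S) && (v != y)]) => [v0 /andP [v0S v0y]|Hno]; last first.
  exists [::]; split => //.
  - by move=> v vS; rewrite inE; case: (v =P y) => // /eqP vy; move: (Hno v); rewrite /= vS vy.
  - by rewrite big_pred0 // => v; apply/negP => /andP [vS vy]; move: (Hno v); rewrite /= vS vy.
  - by move=> w; rewrite big_pred0 // => v; apply/negP => /andP [vS vy]; move: (Hno v); rewrite /= vS vy.
pose u := [arg max_(v > v0 in [pred v | (v \in S) && (v != y)]) dist v].
have [uS uy umax] : [/\ u \in S, u != y & forall v, v \in S -> v != y -> dist v <= dist u].
  rewrite /u; case: arg_maxnP => [|w]; first by rewrite inE v0S.
  rewrite inE => /andP [wS wy] Hw.
  by split => // v vS vy; apply: Hw; rewrite inE vS.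
pose S' := S :\ u.
have yS' : y \in S' by rewrite !inE eq_sym uy.
have Hcl' : forall v, v \in S' -> v != y -> par v \in S'.
  move=> v; rewrite !inE => /andP [vu vS] vy; rewrite Hcl // andbT.
  apply/eqP => pu; have := Hdist vy; rewrite pu ltnNge umax //.
have HN' : #|S'| <= N.
  by move: HN; rewrite (cardsD1 u S) uS add1n ltnS.
case: (IH S' HN' yS' Hcl') => s [P1 P2 P3 P4 P5].
have pS' : par u \in y :: s.
  apply: P3; rewrite !inE Hcl // andbT; apply/eqP => E.
  by have := Hdist uy; rewrite E ltnn.
case: (insert_walk esym (m u) P1 pS' (Hpar uy)) => s' [Q1 Q2 Q3 Q4 [Q5 Q6]].
have Esum : forall F : T -> nat, \sum_(v in S | v != y) F v = F u + \sum_(v in S' | v != y) F v.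
  move=> F; rewrite (bigD1 u) /=; last by rewrite uS uy.
  congr (_ + _); apply: eq_bigl => v; rewrite !inE; by case: (v == u); case: (v \in S); case: (v == y).
exists s'; split => //.
- by rewrite Q2.
- move=> v vS; case: (v =P u) => [->|/eqP vu]; first by apply: Q5; apply: Hm.
  by apply: Q4; apply: P3; rewrite !inE vu.
- by rewrite Q3 P4 Esum doubleD addnC.
- by move=> w; rewrite Q6 P5 Esum doubleD addnC.
Qed.
End Tree.

Section Mvals.
Variable T : finType.
Variable y : T.
Variable par : T -> T.
Variable dist : T -> nat.
Hypothesis Hdist : forall v, v != y -> dist (par v) < dist v.
Variables B g : T -> nat.
Variable k : nat.
Hypothesis Hk : 0 < k.

Definition ttm (m : T -> nat) (w : T) : nat :=
  \sum_(v | v != y) m v * ((par v == w) + (v == w)).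

Lemma par_neq u : u != y -> (par u == u) = false.
Proof. by move=> uy; apply/negbTE/eqP => E; have := Hdist uy; rewrite E ltnn. Qed.

Lemma tt_split m u : u != y ->
  ttm m u = m u + \sum_(v | (v != y) && (v != u)) m v * ((par v == u) + (v == u)).
Proof. by move=> uy; rewrite /ttm (bigD1 u) //= par_neq // eqxx muln1. Qed.

Definition mval (t c : nat) : nat :=
  let r := (t + k - c %% k) %% k in if r == 0 then k else r.

Lemma mval_spec t c : 0 < mval t c <= k /\ c + mval t c = t %[mod k].
Proof.
rewrite /mval /=; set r := (t + k - c %% k) %% k.
have rk : r < k by rewrite ltn_pmod.
have Hr : c + r = t %[mod k].
  rewrite /r modnDmr {1}(divn_eq c k) -addnA addnC.
  have ck : c %% k < k by rewrite ltn_pmod.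
  have -> : c %% k + (t + k - c %% k) = t + k by lia.
  by rewrite addnC modnMDl modnDr.
case: (r =P 0) => [r0|/eqP r0].
  by split; [rewrite Hk leqnn | rewrite modnDr -Hr r0 addn0].
by split; [rewrite lt0n r0 ltnW | ].
Qed.

Lemma m_exists : exists m : T -> nat, (forall v, v != y -> 0 < m v <= k) /\
  (forall v, v != y -> (B v)./2 + ttm m v = g v %[mod k]).
Proof.
suff H : forall S : {set T}, y \notin S -> (forall u, u != y -> par u \in S -> u \in S) ->
  exists m : T -> nat, (forall v, v \in S -> 0 < m v <= k) /\
    (forall v, v \in S -> (B v)./2 + ttm m v = g v %[mod k]).
  case: (H [set v | v != y]) => [||m [H1 H2]]; [by rewrite inE eqxx | by move=> u uy _; rewrite inE | ].
  by exists m; split => v vy; [apply: H1 | apply: H2]; rewrite inE.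
move=> S; move: {2}#|S| (leqnn #|S|) => N; elim: N S => [|N IH] S HN yS Hcl.
  exists (fun _ => 1); move: HN; rewrite leqn0 => /eqP/cards0_eq ->; by split => v; rewrite inE.
case: (set_0Vmem S) => [-> | [v0 v0S]]; first by exists (fun _ => 1); split => v; rewrite inE.
pose u := [arg min_(v < v0 in S) dist v].
have [uS umin] : u \in S /\ forall v, v \in S -> dist u <= dist v.
  by rewrite /u; case: arg_minnP.
have uy : u != y by apply: contraNneq yS => <-.
pose S' := S :\ u.
have yS' : y \notin S' by rewrite inE negb_and yS orbT.
have Hcl' : forall w, w != y -> par w \in S' -> w \in S'.
  move=> w wy; rewrite !inE => /andP [pu pS]; rewrite Hcl // andbT.
  apply/eqP => wu; subst w; have := Hdist wy; rewrite ltnNge umin //.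
have HN' : #|S'| <= N by move: HN; rewrite (cardsD1 u S) uS add1n ltnS.
case: (IH S' HN' yS' Hcl') => m' [H1 H2].
pose rest := \sum_(v | (v != y) && (v != u)) m' v * ((par v == u) + (v == u)).
pose m := fun w => if w == u then mval (g u) ((B u)./2 + rest) else m' w.
have [Hb Hc] := mval_spec (g u) ((B u)./2 + rest).
exists m; split.
- move=> w wS; rewrite /m; case: (w =P u) => [_|/eqP wu]; first exact Hb.
  by apply: H1; rewrite !inE wu.
- move=> w wS; case: (w =P u) => [->|/eqP wu].
  + rewrite tt_split // /m eqxx.
    have -> : \sum_(v | (v != y) && (v != u)) (if v == u then mval (g u) ((B u)./2 + rest) else m' v)
        * ((par v == u) + (v == u)) = rest.
      by apply: eq_bigr => v /andP [_ /negbTE ->].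
    by rewrite -Hc; congr (_ %% _); lia.
  + have wS' : w \in S' by rewrite !inE wu.
    rewrite -(H2 w wS'); congr ((_ + _) %% _); apply: eq_bigr => v vy; rewrite /m.
    case: (v =P u) => [->|//]; rewrite [u == w]eq_sym (negbTE wu) addn0.
    case: (par u =P w) => [E|]; last by rewrite !muln0.
    by have := Hdist uy; rewrite E ltnNge umin.
Qed.

End Mvals.

Section Root.
Variable T : finType.
Variable y : T.
Variable par : T -> T.
Variable dist : T -> nat.
Hypothesis Hpd : forall v, v != y -> (dist (par v)).+1 = dist v.
Hypothesis Hdy : dist y = 0.

Lemma sum_ttm_side (P : pred T) m :
  \sum_(w | P w) ttm y par m w = \sum_(v | v != y) m v * (P (par v) + P v).
Proof.
rewrite /ttm exchange_big /=; apply: eq_bigr => v vy.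
by rewrite -big_distrr /= big_split /= !sum_eq1.
Qed.

Lemma ttm_balance m :
  \sum_(w | ~~ odd (dist w)) ttm y par m w = \sum_(w | odd (dist w)) ttm y par m w.
Proof.
rewrite !sum_ttm_side; apply: eq_bigr => v vy; congr (_ * _).
by rewrite -(Hpd vy) /=; case: (odd (dist (par v))).
Qed.

Lemma sum_mod (k : nat) (P : pred T) (F G : T -> nat) :
  (forall v, P v -> F v = G v %[mod k]) -> \sum_(v | P v) F v = \sum_(v | P v) G v %[mod k].
Proof.
move=> H; rewrite -modn_summ -[RHS]modn_summ; congr (_ %% _).
by apply: eq_bigr => v Pv; apply: H.
Qed.

Lemma root_ok (k : nat) (B g m : T -> nat) :
  (forall v, g v < k) ->
  (forall v, v != y -> (B v)./2 + ttm y par m v = g v %[mod k]) ->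
  \sum_(v | ~~ odd (dist v)) (B v)./2 + \sum_(v | odd (dist v)) g v =
    \sum_(v | odd (dist v)) (B v)./2 + \sum_(v | ~~ odd (dist v)) g v %[mod k] ->
  forall v, ((B v)./2 + ttm y par m v) %% k = g v.
Proof.
move=> gk Hc HPQ.
have addm : forall a a' b b', a = a' %[mod k] -> b = b' %[mod k] -> a + b = a' + b' %[mod k].
  by move=> a a' b b' Ha Hb; rewrite -modnDm Ha Hb modnDm.
pose H := fun v => (B v)./2 + ttm y par m v.
suff Hy : H y = g y %[mod k].
  move=> v; rewrite -(modn_small (gk v)); case: (v =P y) => [->|/eqP vy]; first exact: Hy.
  exact: Hc.
have E1 : \sum_(v | ~~ odd (dist v)) H v + \sum_(v | odd (dist v)) (B v)./2 =
          \sum_(v | odd (dist v)) H v + \sum_(v | ~~ odd (dist v)) (B v)./2.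
  rewrite /H !big_split /= ttm_balance.
  move: (\sum_(i | odd (dist i)) ttm y par m i) => a.
  move: (\sum_(i | odd (dist i)) (B i)./2) => b.
  move: (\sum_(i | ~~ odd (dist i)) (B i)./2) => c.
  lia.
have E2 : \sum_(v | odd (dist v)) H v = \sum_(v | odd (dist v)) g v %[mod k].
  apply: sum_mod => v ov; apply: Hc; apply/eqP => vy; by rewrite vy Hdy in ov.
have Ey : ~~ odd (dist y) by rewrite Hdy.
have E3 : \sum_(v | ~~ odd (dist v)) H v =
          H y + \sum_(v | ~~ odd (dist v) && (v != y)) g v %[mod k].
  rewrite (bigD1 y) //=; apply: addm => //; apply: sum_mod => v /andP [_ vy]; exact: Hc.
have E4 : \sum_(v | ~~ odd (dist v)) g v = g y + \sum_(v | ~~ odd (dist v) && (v != y)) g v.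
  by rewrite (bigD1 y).
set X := \sum_(v | ~~ odd (dist v) && (v != y)) g v.
set BO := \sum_(v | odd (dist v)) (B v)./2.
set BE := \sum_(v | ~~ odd (dist v)) (B v)./2.
have : H y + (X + BO) = g y + (X + BO) %[mod k].
  rewrite addnA.
  have -> : (H y + X + BO) %% k = (\sum_(v | ~~ odd (dist v)) H v + BO) %% k.
    by apply: addm.
  rewrite E1.
  have -> : (\sum_(v | odd (dist v)) H v + BE) %% k = (\sum_(v | odd (dist v)) g v + BE) %% k.
    by apply: addm.
  rewrite addnC HPQ E4; congr (_ %% _).
  rewrite -/X -/BO; move: (g y) X BO => a b c; lia.
by move/eqP; rewrite eqn_modDr => /eqP.
Qed.

End Root.
Lemma deg_le_max (T : finType) (e : rel T) v : deg e v <= max_deg e.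
Proof. by rewrite /max_deg; apply: (leq_bigmax v). Qed.

Lemma greedy (T : finType) (e : rel T) : symmetric e -> irreflexive e ->
  exists c : T -> 'I_(max_deg e).+1, proper_coloring e c.
Proof.
move=> esym eirr.
suff H : forall S : {set T}, exists c : T -> 'I_(max_deg e).+1,
    forall a b, a \in S -> b \in S -> e a b -> c a != c b.
  by case: (H setT) => c Hc; exists c => a b; apply: Hc; rewrite inE.
move=> S; move: {2}#|S| (leqnn #|S|) => N; elim: N S => [|N IH] S HN.
  exists (fun _ => ord0); move: HN; rewrite leqn0 => /eqP/cards0_eq ->.
  by move=> a b; rewrite inE.
case: (set_0Vmem S) => [-> | [v vS]].
  by exists (fun _ => ord0); move=> a b; rewrite inE.
have HN' : #|S :\ v| <= N by move: HN; rewrite (cardsD1 v S) vS add1n ltnS.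
case: (IH _ HN') => c Hc.
pose used := [set c w | w in [set w | e v w]].
have Hu : #|used| < #|[set: 'I_(max_deg e).+1]|.
  rewrite cardsT card_ord ltnS; apply: leq_trans (leq_imset_card _ _) _.
  exact: deg_le_max.
have [col colu] : exists col, col \notin used.
  apply/existsP; rewrite -negb_forall; apply/negP => /forallP Hall.
  have : [set: 'I_(max_deg e).+1] \subset used.
    by apply/subsetP => z _; move: (Hall z) => /negPn.
  by move/subset_leq_card; rewrite leqNgt Hu.
exists (fun w => if w == v then col else c w) => a b aS bS ab.
case: (a =P v) => [av|/eqP av]; case: (b =P v) => [bv|/eqP bv].
- by subst; rewrite eirr in ab.
- subst a; apply: contraNneq colu => ->; apply/imsetP; exists b => //; by rewrite inE.
- subst b; rewrite eq_sym; apply: contraNneq colu => ->; apply/imsetP; exists a => //.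
  by rewrite inE esym.
- by apply: Hc => //; rewrite !inE ?av ?bv.
Qed.

Lemma two_path (T : finType) (e : rel T) : simple_graph e -> nice e -> forall x z, e x z ->
  exists a1 a2 a3, [/\ e a2 a1, e a2 a3 & a1 != a3].
Proof.
move=> [esym eirr] [[_ conn] notK2] x z xz.
case H: [exists a2, exists a1, exists a3, [&& e a2 a1, e a2 a3 & a1 != a3]].
  case/existsP: H => a2 /existsP [a1 /existsP [a3 /and3P [H1 H2 H3]]].
  by exists a1, a2, a3.
have uniqn : forall u a b, e u a -> e u b -> a = b.
  move=> u a b ua ub; apply/eqP; apply/negP => /negP ab.
  move/negbT/negP: H; apply; apply/existsP; exists u; apply/existsP; exists a; apply/existsP; exists b.
  by rewrite ua ub ab.
have zx : e z x by rewrite esym.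
have Hp : forall p v, v \in [set x; z] -> path e v p -> last v p \in [set x; z].
  elim=> [|a p IH] v //= Hv /andP [va Hp]; apply: IH Hp.
  move: Hv; rewrite !inE => /orP [] /eqP Ev; subst v.
  - by rewrite (uniqn _ _ _ va xz) eqxx orbT.
  - by rewrite (uniqn _ _ _ va zx) eqxx.
have Hall : forall w, w \in [set x; z].
  move=> w; case/connectP: (conn x w) => p Hpp ->; apply: Hp => //; by rewrite !inE eqxx.
have xnz : x != z by apply/eqP => E; rewrite E eirr in xz.
have c2 : #|[set x; z]| = 2 by rewrite cards2 xnz.
exfalso; apply: notK2; split.
  apply/eqP; rewrite eqn_leq; apply/andP; split.
    rewrite -cardsT -c2.
    by apply: subset_leq_card; apply/subsetP => w _; apply: Hall.
  by rewrite -c2; apply: max_card.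
move=> a b ab; move: (Hall a) (Hall b); rewrite !inE.
case/orP => /eqP Ea /orP [] /eqP Eb; subst a b => //.
  by rewrite eqxx in ab.
by rewrite eqxx in ab.
Qed.

Lemma mu_exists k a b : 0 < k -> (odd k || ~~ odd (a + b)) ->
  exists mu, a + mu.*2 = b %[mod k] /\ (if odd k then mu < k else (mu.*2).+2 <= k).
Proof.
move=> Hk Hpar.
have ak : a %% k < k by rewrite ltn_pmod.
set d := (b + (k - a %% k)) %% k.
have dk : d < k by rewrite ltn_pmod.
have Hd : a + d = b %[mod k].
  rewrite /d modnDmr {1}(divn_eq a k) -addnA.
  have -> : a %% k + (b + (k - a %% k)) = b + k by lia.
  by rewrite modnMDl modnDr.
case ok: (odd k).
  exists ((d * (k.+1)./2) %% k); split; last by rewrite ltn_pmod.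
  have h2 : ((k.+1)./2).*2 = k.+1.
    by have := odd_double_half k.+1; rewrite /= ok /=.
  rewrite -modnDmr -muln2 modnMml muln2 modnDmr doubleMr h2 mulnS addnA addnC.
  by rewrite modnMDl.
move: Hpar; rewrite ok /= => Hpar.
have de : ~~ odd d.
  rewrite /d odd_mod // oddD oddB; last by apply: ltnW.
  by rewrite ok odd_mod // addFb -oddD addnC.
exists d./2; split.
  have -> : (d./2).*2 = d by have := odd_double_half d; rewrite (negbTE de).
  exact: Hd.
have kk : k = (k./2).*2 by have := odd_double_half k; rewrite ok.
have dd : d = (d./2).*2 by have := odd_double_half d; rewrite (negbTE de).
move: dk; rewrite {1}kk {1}dd; lia.
Qed.

Lemma half_shift (T : finType) (F : T -> nat) (a : T) :
  \sum_(v : T) (F v + (a == v))./2 = \sum_(v : T) (F v)./2 + odd (F a).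
Proof.
rewrite (bigD1 a) //= [in RHS](bigD1 a) //= eqxx addn1.
have -> : \sum_(v | v != a) (F v + (a == v))./2 = \sum_(v | v != a) (F v)./2.
  by apply: eq_bigr => v /negbTE; rewrite eq_sym => ->; rewrite addn0.
rewrite -uphalfE uphalf_half.
move: (\sum_(v | v != a) (F v)./2) => t; lia.
Qed.

Lemma mu_shift (T : finType) (P : pred T) (B0 : T -> nat) (mu : nat) (x z : T) :
  \sum_(v | P v) (B0 v + (mu * ((x == v) + (z == v))).*2)./2 =
  \sum_(v | P v) (B0 v)./2 + mu * (P x + P z).
Proof.
have sum1 : forall a : T, \sum_(v | P v) ((a == v) : nat) = P a.
  move=> a; rewrite big_mkcond (bigD1 a) //= eqxx big1 ?addn0; first by case: (P a).
  by move=> w /negbTE; rewrite eq_sym => ->; case: (P w).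
rewrite -sum1 -sum1 -big_split /= big_distrr -big_split /=.
apply: eq_bigr => v _; by rewrite halfD odd_double andbF add0n doubleK.
Qed.

Lemma two_col (T : finType) (e : rel T) (f : T -> bool) :
  (forall x z, e x z -> f x != f z) -> colorable e 2.
Proof.
move=> Hf; exists (fun v => if f v then ord_max else ord0) => x z xz.
by move: (Hf x z xz); case: (f x); case: (f z).
Qed.


Lemma shift2 (T : finType) (F : T -> nat) (a b : T) : a != b ->
  \sum_(v : T) (F v + ((a == v) + (b == v)))./2 = \sum_(v : T) (F v)./2 + odd (F a) + odd (F b).
Proof.
move=> ab.
rewrite (eq_bigr (fun v => ((F v + (a == v)) + (b == v))./2)); last by move=> v _; rewrite addnA.
rewrite (half_shift (fun v => F v + (a == v))) half_shift /=.
by rewrite (negbTE ab) addn0.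
Qed.

Lemma tail_fix (T : finType) (e : rel T) (G : nat) (a1 a2 a3 : T) :
  symmetric e -> irreflexive e -> e a2 a1 -> e a2 a3 -> a1 != a3 ->
  odd (\sum_(v : T) (deg e v)./2 + G) ->
  exists y ts, [/\ path e y ts, size ts <= 2 & ~~ odd (\sum_(v : T) (deg e v + incr y ts v)./2 + G)].
Proof.
move=> esym eirr e21 e23 n13 Hodd.
have n21 : a2 != a1 by apply/eqP => E; rewrite E eirr in e21.
have n23 : a2 != a3 by apply/eqP => E; rewrite E eirr in e23.
have e12 : e a1 a2 by rewrite esym.
case: (boolP (odd (deg e a1) == odd (deg e a2))) => [/eqP p12|p12].
  case: (boolP (odd (deg e a2) == odd (deg e a3))) => [/eqP p23|p23].
  - exists a1, [:: a2; a3]; split => //=; first by rewrite e12 e23.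
    rewrite (eq_bigr (fun v => ((deg e v + ((a1 == v) + (a2 == v))) + ((a2 == v) + (a3 == v)))./2));
      last by move=> v _; rewrite addn0 !addnA.
    rewrite (shift2 (fun v => deg e v + ((a1 == v) + (a2 == v))) n23) /= shift2; last by rewrite eq_sym.
    rewrite eqxx (negbTE n13) eq_sym (negbTE n23) !addn0.
    move: Hodd p12 p23; rewrite (negbTE n21) !oddD /=.
    by case: (odd (deg e a1)); case: (odd (deg e a2)); case: (odd (deg e a3));
      case: (odd (\sum_v (deg e v)./2)); case: (odd G).
  - exists a2, [:: a3]; split => //=; first by rewrite e23.
    rewrite (eq_bigr (fun v => (deg e v + ((a2 == v) + (a3 == v)))./2));
      last by move=> v _; rewrite addn0.
    rewrite shift2 //; move: Hodd p23; rewrite !oddD.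
    by case: (odd (deg e a2)); case: (odd (deg e a3));
      case: (odd (\sum_v (deg e v)./2)); case: (odd G).
exists a1, [:: a2]; split => //=; first by rewrite e12.
rewrite (eq_bigr (fun v => (deg e v + ((a1 == v) + (a2 == v)))./2));
  last by move=> v _; rewrite addn0.
rewrite shift2; last by rewrite eq_sym.
move: Hodd p12; rewrite !oddD.
by case: (odd (deg e a1)); case: (odd (deg e a2));
  case: (odd (\sum_v (deg e v)./2)); case: (odd G).
Qed.

Theorem corollary4p6 (T : finType) (e : rel T) (k : nat) :
  simple_graph e -> nice e -> chromatic_number_is e k ->
  MLW_le e (2 * k * (#|T| - 1) + 2 * max_deg e).
Proof.
move=> [esym eirr] Hnice [[c Hc] Hmin].
case: (boolP [exists a, exists b, e a b]) => [/existsP [x0 /existsP [z0 xz0]] | Hno]; last first.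
  case/card_gt0P: Hnice.1.1 => u0 _.
  exists u0, [::]; split => //; split => // a b; rewrite /mult /=.
  have -> : e a b = false.
    by apply/negP => ab; move/negP: Hno; apply; apply/existsP; exists a; apply/existsP; exists b.
  by [].
set Delta := max_deg e.
have conn0 := Hnice.1.2.
have k2 : 1 < k.
  rewrite ltnNge; apply/negP => kle; move: (Hc _ _ xz0); apply/negP; rewrite negbK.
  apply/eqP/val_inj => /=; move: (ltn_ord (c x0)) (ltn_ord (c z0)); lia.
have D1 : 0 < Delta.
  apply: leq_trans (deg_le_max e x0); rewrite /deg card_gt0; apply/set0Pn; exists z0.
  by rewrite inE.
have kD : k <= Delta.+1.
  by case: (greedy esym eirr) => c' Hc'; apply: Hmin; exists c'.
case: (two_path (conj esym eirr) Hnice xz0) => a1 [a2 [a3 [e21 e23 n13]]].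
pose g := fun v => nat_of_ord (c v).
have gk : forall v, g v < k by move=> v; rewrite /g ltn_ord.
pose G := \sum_(v : T) g v.
have [y [ts [Pts Sts Hts]]] : exists y ts, [/\ path e y ts, size ts <= 2 &
    (odd k = false -> ~~ odd (\sum_(v : T) (deg e v + incr y ts v)./2 + G)) /\ (odd k -> ts = [::])].
  case: (boolP (odd k || ~~ odd (\sum_(v : T) (deg e v)./2 + G))) => [H|].
    exists a1, [::]; split => //; split => // ok.
    have -> : \sum_(v : T) (deg e v + incr a1 [::] v)./2 = \sum_(v : T) (deg e v)./2.
      by apply: eq_bigr => v _; rewrite /= addn0.
    by move: H; rewrite ok.
  rewrite negb_or negbK => /andP [nok Hodd].
  case: (tail_fix esym eirr e21 e23 n13 Hodd) => y [ts [P1 P2 P3]].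
  by exists y, ts; split => //; split => // ok; rewrite ok in nok.
have conn : forall v, connect e y v by move=> v; apply: conn0.
pose D := dist conn.
pose p := par conn.
have Hps : forall v, v != y -> e (p v) v /\ (D (p v)).+1 = D v := par_spec conn.
have HDy : D y = 0 := dist_y conn.
pose B0 := fun v => deg e v + incr y ts v.
pose P0 := \sum_(v | ~~ odd (D v)) (B0 v)./2 + \sum_(v | odd (D v)) g v.
pose Q0 := \sum_(v | odd (D v)) (B0 v)./2 + \sum_(v | ~~ odd (D v)) g v.
have PQ : P0 + Q0 = \sum_(v : T) (B0 v)./2 + G.
  rewrite /P0 /Q0 /G [\sum_(v : T) (B0 v)./2](bigID (fun v => odd (D v)))
    [\sum_(v : T) g v](bigID (fun v => odd (D v))) /=.
  move: (\sum_(v | odd (D v)) (B0 v)./2) (\sum_(v | ~~ odd (D v)) (B0 v)./2)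
    (\sum_(v | odd (D v)) g v) (\sum_(v | ~~ odd (D v)) g v) => s1 s2 s3 s4; lia.
have Hpar : odd k || ~~ odd (P0 + Q0).
  by rewrite PQ; case ok: (odd k) => //=; apply: Hts.1.
have [x [z [mu [xz Hcong Hcost]]]] : exists x z mu, [/\ e x z,
   \sum_(v | ~~ odd (D v)) (B0 v + (mu * ((x == v) + (z == v))).*2)./2 + \sum_(v | odd (D v)) g v =
   \sum_(v | odd (D v)) (B0 v + (mu * ((x == v) + (z == v))).*2)./2 + \sum_(v | ~~ odd (D v)) g v %[mod k]
  & mu.*2 + size ts <= Delta.*2].
  have costok : forall mu, (if odd k then mu < k else (mu.*2).+2 <= k) -> mu.*2 + size ts <= Delta.*2.
    move=> mu; case ok: (odd k) => Hb.
      by rewrite Hts.2 //=; move: Hb kD; lia.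
    by move: Hb kD Sts D1; lia.
  case: (boolP [exists x, exists z, e x z && (odd (D x) == odd (D z))]) =>
      [/existsP [x /existsP [z /andP [xz /eqP sxz]]] | Hbip].
    case sx: (odd (D x)).
    - have Hpar' : odd k || ~~ odd (Q0 + P0) by rewrite addnC.
      case: (mu_exists (ltnW k2) Hpar') => mu [Hm Hb].
      exists x, z, mu; split => //; last exact: costok.
      rewrite !mu_shift /= -sxz sx /= muln0 addn0.
      have -> : \sum_(v | odd (D v)) (B0 v)./2 + mu * 2 + \sum_(v | ~~ odd (D v)) g v = Q0 + mu.*2.
        by rewrite /Q0 addnAC muln2.
      by rewrite Hm.
    - case: (mu_exists (ltnW k2) Hpar) => mu [Hm Hb].
      exists x, z, mu; split => //; last exact: costok.
      rewrite !mu_shift /= -sxz sx /= muln0 addn0.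
      have -> : \sum_(v | ~~ odd (D v)) (B0 v)./2 + mu * 2 + \sum_(v | odd (D v)) g v = P0 + mu.*2.
        by rewrite /P0 addnAC muln2.
      by rewrite Hm.
  have k2' : k = 2.
    apply/eqP; rewrite eqn_leq k2 andbT; apply: Hmin; apply: (two_col (f := fun v => odd (D v))).
    move=> a b ab; apply/negP => /eqP sab; move/negP: Hbip; apply.
    by apply/existsP; exists a; apply/existsP; exists b; rewrite ab sab eqxx.
  exists x0, z0, 0; split => //; last by rewrite /= add0n; move: Sts D1; lia.
  rewrite !mu_shift !mul0n !addn0.
  move: Hpar; rewrite k2' /= oddD => Hpar.
  by rewrite !modn2 -/P0 -/Q0; move: Hpar; case: (odd P0); case: (odd Q0).
pose B := fun v => B0 v + (mu * ((x == v) + (z == v))).*2.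
have Hdist : forall v, v != y -> D (p v) < D v by move=> v /Hps [_ <-].
have k0 : 0 < k by apply: ltnW.
case: (m_exists Hdist B g k0) => m [Hmk Hcond].
have Hpe : forall v, v != y -> e (p v) v by move=> v /Hps [].
have Hm0 : forall v, v != y -> 0 < m v by move=> v /Hmk /andP [].
have [s1 [P1 P2 P3 P4 P5]] := tree_walk esym Hpe Hdist Hm0 (S := setT) (in_setT y) (fun v _ _ => in_setT (p v)).
have xs1 : x \in y :: s1 by apply: P3; rewrite inE.
case: (insert_walk esym mu P1 xs1 xz) => s2 [Q1 Q2 Q3 _ [_ Q6]].
have Pf : path e y (s2 ++ ts) by rewrite cat_path Q1 Q2 P2 Pts.
have Esum : forall F : T -> nat, \sum_(v in [set: T] | v != y) F v = \sum_(v | v != y) F v.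
  by move=> F; apply: eq_bigl => v; rewrite inE.
exists y, (s2 ++ ts); split; last first.
  rewrite /walk_length size_cat Q3 P4 Esum.
  have Hs : \sum_(v | v != y) m v <= (#|T| - 1) * k.
    have Hs1 : \sum_(v | v != y) m v <= \sum_(v | v != y) k.
      by apply: leq_sum => v vy; case/andP: (Hmk v vy).
    apply: (leq_trans Hs1); rewrite sum_nat_const; have := cardC1 y; rewrite /predC1 => ->.
    by rewrite subn1.
  rewrite -mulnA [k * _]mulnC.
  move: Hs Hcost; move: (\sum_(v | v != y) m v) ((#|T| - 1) * k) (size ts) => t1 t2 t3.
  clear; lia.
split => // a b Hab.
have ab := mult_edge esym Pf Hab.
rewrite !deg_plus_incr //.
have Hh : forall v, (deg e v + incr y (s2 ++ ts) v)./2 = (B v)./2 + ttm y p m v.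
  move=> v; rewrite incr_cat Q2 P2 Q6 P5 Esum /B /B0 -/(ttm y p m v).
  have -> : deg e v + ((ttm y p m v).*2 + (mu * ((x == v) + (z == v))).*2 + incr y ts v) =
            deg e v + incr y ts v + (mu * ((x == v) + (z == v))).*2 + (ttm y p m v).*2.
    move: (ttm y p m v) (mu * ((x == v) + (z == v))) (deg e v) (incr y ts v) => t1 t2 t3 t4.
    clear; lia.
  by rewrite halfD odd_double andbF add0n doubleK.
have Hr := root_ok (fun v vy => (Hps v vy).2) HDy gk Hcond Hcong.
apply/negP => /eqP Efab.
have gab : g a = g b by rewrite -(Hr a) -(Hr b) -!Hh Efab.
by move: (Hc a b ab); rewrite (val_inj gab) eqxx.
Qed.
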